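(* Fix $\lambda,\sigma>0$, let $\{\psi_p\}_{p\in\mathbb{R}^2\times S^1}$ be the Gabor family and $d(p,q)=\|\psi_p-\psi_q\|_{L^2}$. For $p_0=(x_0,y_0,\theta_0)$ let $$g(p_0)=2\sigma^2\pi\begin{pmatrix}\big(\frac{1}{4\sigma^2}+\frac{2\pi^2}{\lambda^2}\big)\cos^2\theta_0+\frac{1}{4\sigma^2}\sin^2\theta_0 & \frac{2\pi^2}{\lambda^2}\cos\theta_0\sin\theta_0 & 0\\ \frac{2\pi^2}{\lambda^2}\cos\theta_0\sin\theta_0 & \big(\frac{1}{4\sigma^2}+\frac{2\pi^2}{\lambda^2}\big)\sin^2\theta_0+\frac{1}{4\sigma^2}\cos^2\theta_0 & 0\\ 0&0&\frac{\sigma^2\pi^2}{\lambda^2}\end{pmatrix}.$$ Then, as $p=(x,y,\theta)\to p_0$ (with $\theta-\theta_0$ represented in $(-\pi,\pi]$), writing $\Delta=(x-x_0,y-y_0,\theta-\theta_0)$, $$d^2(p,p_0)=\Delta^{T}g(p_0)\Delta+o(|\Delta|^2).$$ Moreover $\det g(p_0)=8\sigma^6\pi^3\big(\frac{1}{4\sigma^2}+\frac{2\pi^2}{\lambda^2}\big)\frac{1}{4\sigma^2}\frac{\sigma^2\pi^2}{\lambda^2}$ is independent of $p_0$, so the Riemannian measure of $g$ is a constant multiple of Lebesgue measure on $\mathbb{R}^2\times S^1$.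
   Context: Gabor family: for $p=(x,y,\theta)\in\mathbb{R}^2\times S^1$, $\psi_p(u,v)=\psi_0(R_{-\theta}(u-x,v-y))$ with $\psi_0(u,v)=\exp(2\pi iu/\lambda)\exp(-\frac{u^2+v^2}{2\sigma^2})$, where $R_\alpha$ is the rotation of $\mathbb{R}^2$ by angle $\alpha$. *)

(* Defs.v *)
From Stdlib Require Import Reals.
Open Scope R_scope.

Definition rotU (x y th u v : R) : R := (u - x) * cos th + (v - y) * sin th.
Definition rotV (x y th u v : R) : R := - (u - x) * sin th + (v - y) * cos th.

(* psi_0(a,b) = exp(2 pi i a / lam) exp(-(a^2+b^2)/(2 sig^2)), real and imaginary parts. *)
Definition psi0_re (lam sig a b : R) : R :=
  cos (2 * PI * a / lam) * exp (- (a ^ 2 + b ^ 2) / (2 * sig ^ 2)).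
Definition psi0_im (lam sig a b : R) : R :=
  sin (2 * PI * a / lam) * exp (- (a ^ 2 + b ^ 2) / (2 * sig ^ 2)).

(* Gabor family psi_p(u,v) = psi_0(R_{-th}(u-x,v-y)), p = (x,y,th). *)
Definition gabor_re (lam sig x y th u v : R) : R :=
  psi0_re lam sig (rotU x y th u v) (rotV x y th u v).
Definition gabor_im (lam sig x y th u v : R) : R :=
  psi0_im lam sig (rotU x y th u v) (rotV x y th u v).

Definition gabor_diff_sq (lam sig x1 y1 th1 x2 y2 th2 u v : R) : R :=
  (gabor_re lam sig x1 y1 th1 u v - gabor_re lam sig x2 y2 th2 u v) ^ 2 +
  (gabor_im lam sig x1 y1 th1 u v - gabor_im lam sig x2 y2 th2 u v) ^ 2.

Definition improper_integral (f : R -> R) (l : R) : Prop :=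
  forall eps : R, 0 < eps -> exists M : R, 0 < M /\
    forall a b : R, a <= - M -> M <= b ->
      exists pr : Riemann_integrable f a b, Rabs (RiemannInt pr - l) < eps.

Definition integral_R2 (f : R -> R -> R) (l : R) : Prop :=
  exists F : R -> R,
    (forall u : R, improper_integral (fun v => f u v) (F u)) /\
    improper_integral F l.

Definition gabor_dist_sq (lam sig x1 y1 th1 x2 y2 th2 l : R) : Prop :=
  integral_R2 (gabor_diff_sq lam sig x1 y1 th1 x2 y2 th2) l.

(* Representative of an angle difference in (-pi, pi]. *)
Definition angle_rep (t : R) : R :=
  t + 2 * PI * IZR (up (- (t + PI) / (2 * PI))).

(* The metric tensor g(p0); indices 0,1,2 correspond to x, y, theta. *)
Definition gmat (lam sig th0 : R) (i j : nat) : R :=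
  let A := 1 / (4 * sig ^ 2) + 2 * PI ^ 2 / lam ^ 2 in
  let B := 1 / (4 * sig ^ 2) in
  let C := 2 * PI ^ 2 / lam ^ 2 in
  2 * sig ^ 2 * PI *
  match i, j with
  | 0%nat, 0%nat => A * (cos th0) ^ 2 + B * (sin th0) ^ 2
  | 0%nat, 1%nat => C * cos th0 * sin th0
  | 1%nat, 0%nat => C * cos th0 * sin th0
  | 1%nat, 1%nat => A * (sin th0) ^ 2 + B * (cos th0) ^ 2
  | 2%nat, 2%nat => sig ^ 2 * PI ^ 2 / lam ^ 2
  | _, _ => 0
  end.

Definition quad3 (M : nat -> nat -> R) (d0 d1 d2 : R) : R :=
  let d := fun k : nat => match k with 0%nat => d0 | 1%nat => d1 | _ => d2 end in
  M 0%nat 0%nat * d 0%nat * d 0%nat + M 0%nat 1%nat * d 0%nat * d 1%nat + M 0%nat 2%nat * d 0%nat * d 2%nat +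
  M 1%nat 0%nat * d 1%nat * d 0%nat + M 1%nat 1%nat * d 1%nat * d 1%nat + M 1%nat 2%nat * d 1%nat * d 2%nat +
  M 2%nat 0%nat * d 2%nat * d 0%nat + M 2%nat 1%nat * d 2%nat * d 1%nat + M 2%nat 2%nat * d 2%nat * d 2%nat.

Definition det3 (M : nat -> nat -> R) : R :=
  M 0%nat 0%nat * (M 1%nat 1%nat * M 2%nat 2%nat - M 1%nat 2%nat * M 2%nat 1%nat)
  - M 0%nat 1%nat * (M 1%nat 0%nat * M 2%nat 2%nat - M 1%nat 2%nat * M 2%nat 0%nat)
  + M 0%nat 2%nat * (M 1%nat 0%nat * M 2%nat 1%nat - M 1%nat 1%nat * M 2%nat 0%nat).

Definition norm3 (d0 d1 d2 : R) : R := sqrt (d0 ^ 2 + d1 ^ 2 + d2 ^ 2).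

(* Main.v *)
Require Import Defs.
From Stdlib Require Import Reals Lra Lia Psatz ZArith FunctionalExtensionality.
From Coquelicot Require Import Coquelicot.
Open Scope R_scope.

Definition IMP (f : R -> R) (l : R) : Prop :=
  forall eps, 0 < eps -> exists M, 0 < M /\
    forall a b, a <= - M -> M <= b -> Rabs (RInt f a b - l) < eps.

Definition Cont (f : R -> R) : Prop := forall x, continuous f x.

Lemma cont_ex (f : R -> R) a b : Cont f -> ex_RInt f a b.
Proof. intros H; apply (ex_RInt_continuous (V:=R_CompleteNormedModule)); intros; apply H. Qed.

Lemma IMP_improper f l : Cont f -> IMP f l -> improper_integral f l.
Proof.
  intros Hc H eps Heps. destruct (H eps Heps) as [M [HM HH]].
  exists M; split; auto. intros a b Ha Hb.
  exists (ex_RInt_Reals_0 _ _ _ (cont_ex f a b Hc)).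
  rewrite <- RInt_Reals. apply HH; auto.
Qed.

Lemma improper_unique f l1 l2 :
  improper_integral f l1 -> improper_integral f l2 -> l1 = l2.
Proof.
  intros H1 H2.
  destruct (Req_dec l1 l2) as [e|ne]; auto.
  set (e := Rabs (l1 - l2) / 2).
  assert (He : 0 < e) by (unfold e; apply Rminus_eq_contra in ne; apply Rabs_pos_lt in ne; lra).
  destruct (H1 e He) as [M1 [HM1 K1]]. destruct (H2 e He) as [M2 [HM2 K2]].
  set (M := Rmax M1 M2).
  assert (A1 : -M <= -M1) by (unfold M; pose proof (Rmax_l M1 M2); lra).
  assert (A2 : -M <= -M2) by (unfold M; pose proof (Rmax_r M1 M2); lra).
  destruct (K1 (-M) M A1 (Rmax_l _ _)) as [p1 Q1].
  destruct (K2 (-M) M A2 (Rmax_r _ _)) as [p2 Q2].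
  rewrite (RiemannInt_P5 p2 p1) in Q2.
  assert (Rabs (l1 - l2) < 2 * e).
  { replace (l1 - l2) with ((RiemannInt p1 - l2) - (RiemannInt p1 - l1)) by ring.
    eapply Rle_lt_trans. apply Rabs_triang. rewrite Rabs_Ropp. lra. }
  unfold e in H; lra.
Qed.

Lemma IMP_ext f g l : (forall x, f x = g x) -> IMP f l -> IMP g l.
Proof. intros H; replace g with f; auto. apply functional_extensionality; auto. Qed.

Lemma RInt_scal_R f c a b : ex_RInt f a b -> RInt (fun x => c * f x) a b = c * RInt f a b.
Proof. intros H. apply (RInt_scal f a b c H). Qed.

Lemma RInt_plus_R f g a b : ex_RInt f a b -> ex_RInt g a b ->
  RInt (fun x => f x + g x) a b = RInt f a b + RInt g a b.
Proof. intros H1 H2. apply (RInt_plus f g a b H1 H2). Qed.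

Lemma Cont_plus f g : Cont f -> Cont g -> Cont (fun x => f x + g x).
Proof. intros Hf Hg x. apply (continuous_plus f g); auto. Qed.

Lemma Cont_mult f g : Cont f -> Cont g -> Cont (fun x => f x * g x).
Proof. intros Hf Hg x. apply (continuous_mult f g); auto. Qed.

Lemma Cont_const c : Cont (fun _ => c).
Proof. intros x; apply continuous_const. Qed.

Lemma IMP_plus f g l1 l2 : Cont f -> Cont g -> IMP f l1 -> IMP g l2 ->
  IMP (fun x => f x + g x) (l1 + l2).
Proof.
  intros Cf Cg H1 H2 eps Heps.
  destruct (H1 (eps/2)) as [M1 [P1 K1]]; try lra.
  destruct (H2 (eps/2)) as [M2 [P2 K2]]; try lra.
  exists (Rmax M1 M2); split. eapply Rlt_le_trans; [exact P1| apply Rmax_l].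
  intros a b Ha Hb. rewrite RInt_plus_R by (apply cont_ex; auto).
  pose proof (Rmax_l M1 M2). pose proof (Rmax_r M1 M2).
  specialize (K1 a b ltac:(lra) ltac:(lra)). specialize (K2 a b ltac:(lra) ltac:(lra)).
  replace (RInt f a b + RInt g a b - (l1 + l2)) with ((RInt f a b - l1) + (RInt g a b - l2)) by ring.
  eapply Rle_lt_trans. apply Rabs_triang. lra.
Qed.

Lemma IMP_scal f c l : Cont f -> IMP f l -> IMP (fun x => c * f x) (c * l).
Proof.
  intros Cf H eps Heps.
  destruct (H (eps / (Rabs c + 1))) as [M [PM K]].
  { apply Rdiv_lt_0_compat; auto. pose proof (Rabs_pos c); lra. }
  exists M; split; auto. intros a b Ha Hb.
  rewrite RInt_scal_R by (apply cont_ex; auto).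
  replace (c * RInt f a b - c * l) with (c * (RInt f a b - l)) by ring.
  rewrite Rabs_mult. specialize (K a b Ha Hb).
  pose proof (Rabs_pos c).
  apply Rle_lt_trans with (Rabs c * (eps / (Rabs c + 1))).
  apply Rmult_le_compat_l; lra.
  apply Rlt_le_trans with ((Rabs c + 1) * (eps / (Rabs c + 1))).
  apply Rmult_lt_compat_r. apply Rdiv_lt_0_compat; lra. lra.
  right; field; lra.
Qed.

Lemma cont_of_pt f : (forall x, continuity_pt f x) -> Cont f.
Proof. intros H x. apply continuity_pt_filterlim. apply H. Qed.

Lemma pt_of_cont f : Cont f -> forall x, continuity_pt f x.
Proof. intros H x. apply continuity_pt_filterlim. apply H. Qed.

Lemma Cont_lin f s m : Cont f -> Cont (fun t => f ((t - m) / s)).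
Proof.
  intros Cf. apply cont_of_pt. intros x.
  apply (continuity_pt_comp (fun t => (t - m) / s) f). 2: apply pt_of_cont; auto.
  unfold Rdiv. apply continuity_pt_mult. apply continuity_pt_minus. apply continuity_pt_id.
  apply continuity_pt_const; intros u v; auto. apply continuity_pt_const; intros u v; auto.
Qed.

Lemma RInt_lin f s m a b : Cont f -> 0 < s ->
  RInt (fun t => f ((t - m) / s)) a b = s * RInt f ((a - m) / s) ((b - m) / s).
Proof.
  intros Cf Hs.
  pose proof (RInt_comp_lin f (/ s) (- m / s) a b (cont_ex f _ _ Cf)) as E.
  assert (e1 : / s * a + - m / s = (a - m) / s) by (field; lra).
  assert (e2 : / s * b + - m / s = (b - m) / s) by (field; lra).
  rewrite e1, e2 in E.
  assert (Ce : ex_RInt (fun t => f ((t - m) / s)) a b) by (apply cont_ex, Cont_lin; auto).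
  assert (E2 : RInt (fun y : R => scal (/ s) (f (/ s * y + - m / s))) a b = / s * RInt (fun t => f ((t - m) / s)) a b).
  { rewrite <- (RInt_scal_R _ (/ s) a b Ce). apply RInt_ext. intros x _.
    change (scal (/ s) (f (/ s * x + - m / s))) with (/ s * (f (/ s * x + - m / s))).
    f_equal. f_equal. field. lra. }
  assert (E3 : RInt f ((a - m) / s) ((b - m) / s) = / s * RInt (fun t => f ((t - m) / s)) a b).
  { rewrite <- E. exact E2. }
  rewrite E3, <- Rmult_assoc, Rinv_r, Rmult_1_l; [reflexivity|lra].
Qed.

Lemma IMP_lin f s m l : Cont f -> 0 < s -> IMP f l ->
  IMP (fun t => f ((t - m) / s)) (s * l).
Proof.
  intros Cf Hs H eps Heps.
  destruct (H (eps / s)) as [M [PM K]]. apply Rdiv_lt_0_compat; auto.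
  exists (Rabs m + s * M); split.
  { pose proof (Rabs_pos m). pose proof (Rmult_lt_0_compat s M Hs PM). lra. }
  intros a b Ha Hb. rewrite RInt_lin; auto.
  replace (s * RInt f ((a - m) / s) ((b - m) / s) - s * l) with (s * (RInt f ((a - m) / s) ((b - m) / s) - l)) by ring.
  rewrite Rabs_mult, (Rabs_right s) by lra.
  pose proof (Rle_abs m). pose proof (Rle_abs (-m)). rewrite Rabs_Ropp in H1.
  assert (A1 : (a - m) / s <= - M).
  { apply (Rmult_le_reg_r s); auto. unfold Rdiv; rewrite Rmult_assoc, Rinv_l by lra. lra. }
  assert (A2 : M <= (b - m) / s).
  { apply (Rmult_le_reg_r s); auto. unfold Rdiv; rewrite Rmult_assoc, Rinv_l by lra. lra. }
  specialize (K _ _ A1 A2).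
  apply Rlt_le_trans with (s * (eps / s)). apply Rmult_lt_compat_l; auto. right; field; lra.
Qed.

Ltac req := match goal with |- @eq _ ?a ?b => change (@eq R a b) end.


Lemma Cont_abs f : Cont f -> Cont (fun x => Rabs (f x)).
Proof.
  intros Cf; apply cont_of_pt; intros x.
  apply (continuity_pt_comp f Rabs). apply pt_of_cont; auto. apply Rcontinuity_abs.
Qed.

Lemma RInt_inv2 C a b : 0 < a <= b ->
  RInt (fun x => C / (x * x)) a b = C / a - C / b.
Proof.
  intros H. apply is_RInt_unique.
  replace (C / a - C / b) with (minus ((fun x => - C / x) b) ((fun x => - C / x) a)).
  2:{ unfold minus, plus, opp; simpl. field; lra. }
  apply (is_RInt_derive (V:=R_CompleteNormedModule)).
  - intros x Hx. rewrite Rmin_left in Hx by lra. rewrite Rmax_right in Hx by lra.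
    auto_derive. lra. field. lra.
  - intros x Hx. rewrite Rmin_left in Hx by lra. rewrite Rmax_right in Hx by lra.
    apply continuity_pt_filterlim. unfold Rdiv. apply continuity_pt_mult.
    apply continuity_pt_const; intros u v; auto. apply continuity_pt_inv.
    apply continuity_pt_mult; apply continuity_pt_id. nra.
Qed.

Lemma RInt_inv2n C a b : a <= b < 0 ->
  RInt (fun x => C / (x * x)) a b = C / a - C / b.
Proof.
  intros H. apply is_RInt_unique.
  replace (C / a - C / b) with (minus ((fun x => - C / x) b) ((fun x => - C / x) a)).
  2:{ unfold minus, plus, opp; simpl. field; lra. }
  apply (is_RInt_derive (V:=R_CompleteNormedModule)).
  - intros x Hx. rewrite Rmin_left in Hx by lra. rewrite Rmax_right in Hx by lra.
    auto_derive. lra. field. lra.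
  - intros x Hx. rewrite Rmin_left in Hx by lra. rewrite Rmax_right in Hx by lra.
    apply continuity_pt_filterlim. unfold Rdiv. apply continuity_pt_mult.
    apply continuity_pt_const; intros u v; auto. apply continuity_pt_inv.
    apply continuity_pt_mult; apply continuity_pt_id. nra.
Qed.

Lemma ex_RInt_inv2 C a b : (0 < a <= b \/ a <= b < 0) -> ex_RInt (fun x => C / (x * x)) a b.
Proof.
  intros H. apply (ex_RInt_continuous (V:=R_CompleteNormedModule)).
  intros x Hx. rewrite Rmin_left in Hx by lra. rewrite Rmax_right in Hx by lra.
  apply continuity_pt_filterlim. unfold Rdiv. apply continuity_pt_mult.
  apply continuity_pt_const; intros u v; auto. apply continuity_pt_inv.
  apply continuity_pt_mult; apply continuity_pt_id. nra.
Qed.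

Lemma dom_le C x : 0 <= C -> x <> 0 -> C / (1 + x ^ 2) <= C / (x * x).
Proof.
  intros HC Hx. unfold Rdiv. apply Rmult_le_compat_l; auto.
  apply Rinv_le_contravar. nra. simpl; nra.
Qed.

Lemma tail_right f C M b : Cont f -> 0 <= C -> (forall x, Rabs (f x) <= C / (1 + x ^ 2)) ->
  1 <= M <= b -> Rabs (RInt f M b) <= C / M.
Proof.
  intros Cf HC Hd HM.
  eapply Rle_trans. apply abs_RInt_le. lra. apply cont_ex; auto.
  eapply Rle_trans. apply (RInt_le _ (fun x => C / (x * x))). lra.
  apply cont_ex, Cont_abs; auto. apply ex_RInt_inv2; lra.
  intros x Hx. eapply Rle_trans. apply Hd. apply dom_le; auto; lra.
  rewrite RInt_inv2 by lra.
  assert (0 <= C / b) by (apply Rdiv_le_0_compat; lra). lra.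
Qed.

Lemma tail_left f C M a : Cont f -> 0 <= C -> (forall x, Rabs (f x) <= C / (1 + x ^ 2)) ->
  1 <= M -> a <= - M -> Rabs (RInt f a (- M)) <= C / M.
Proof.
  intros Cf HC Hd HM Ha.
  eapply Rle_trans. apply abs_RInt_le. lra. apply cont_ex; auto.
  eapply Rle_trans. apply (RInt_le _ (fun x => C / (x * x))). lra.
  apply cont_ex, Cont_abs; auto. apply ex_RInt_inv2; lra.
  intros x Hx. eapply Rle_trans. apply Hd. apply dom_le; auto; lra.
  rewrite RInt_inv2n by lra.
  assert (C / a <= 0).
  { unfold Rdiv. apply Rmult_le_0_l. auto. apply Rlt_le, Rinv_lt_0_compat. lra. }
  replace (C / - M) with (- (C / M)) by (field; lra). lra.
Qed.

Lemma RInt_split3 f a b M : Cont f -> RInt f a b = RInt f a (- M) + RInt f (- M) M + RInt f M b.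
Proof.
  intros Cf.
  rewrite <- (RInt_Chasles f a M b) by (apply cont_ex; auto).
  rewrite <- (RInt_Chasles f a (- M) M) by (apply cont_ex; auto). reflexivity.
Qed.

Lemma sym_tail f C l : Cont f -> 0 <= C -> (forall x, Rabs (f x) <= C / (1 + x ^ 2)) ->
  (forall eps, 0 < eps -> exists M0, forall M, M0 <= M -> Rabs (RInt f (- M) M - l) < eps) ->
  IMP f l.
Proof.
  intros Cf HC Hd Hs eps Heps.
  destruct (Hs (eps / 2)) as [M0 HM0]. lra.
  set (M := Rmax (Rmax M0 1) (4 * C / eps)).
  assert (M1 : 1 <= M) by (unfold M; pose proof (Rmax_l (Rmax M0 1) (4 * C / eps)); pose proof (Rmax_r M0 1); lra).
  assert (M2 : M0 <= M) by (unfold M; pose proof (Rmax_l (Rmax M0 1) (4 * C / eps)); pose proof (Rmax_l M0 1); lra).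
  assert (M3 : 4 * C / eps <= M) by (unfold M; apply Rmax_r).
  assert (T : C / M <= eps / 4).
  { apply (Rmult_le_reg_r M). lra. unfold Rdiv at 1. rewrite Rmult_assoc, Rinv_l by lra.
    apply (Rmult_le_reg_r (4 / eps)). apply Rdiv_lt_0_compat; lra.
    replace (eps / 4 * M * (4 / eps)) with M by (field; lra).
    replace (C * 1 * (4 / eps)) with (4 * C / eps) by (field; lra). lra. }
  exists M; split. lra.
  intros a b Ha Hb.
  rewrite (RInt_split3 f a b M Cf).
  pose proof (tail_right f C M b Cf HC Hd ltac:(lra)).
  pose proof (tail_left f C M a Cf HC Hd M1 Ha).
  specialize (HM0 M M2).
  replace (RInt f a (- M) + RInt f (- M) M + RInt f M b - l) with
     (RInt f a (- M) + (RInt f (- M) M - l) + RInt f M b) by ring.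
  eapply Rle_lt_trans. apply Rabs_triang.
  eapply Rle_lt_trans. apply Rplus_le_compat_r. apply Rabs_triang. lra.
Qed.


Definition gs (t : R) : R := exp (- (t * t)).
Definition Ig (x : R) : R := RInt gs 0 x.
Definition uf (x t : R) : R := exp (- (x * x) * (1 + t * t)) / (1 + t * t).
Definition Uf (x : R) : R := RInt (fun t => uf x t) 0 1.

Lemma Cont_gs : Cont gs.
Proof. apply cont_of_pt; intros x; unfold gs; reg. Qed.

Lemma cont_uf x : Cont (uf x).
Proof.
  apply cont_of_pt; intros t; unfold uf.
  apply continuity_pt_div. reg. reg. nra.
Qed.

Lemma Ig_deriv x : is_derive Ig x (gs x).
Proof.
  apply (is_derive_RInt gs Ig 0 x).
  - apply filter_forall. intros b. apply (RInt_correct (V:=R_CompleteNormedModule)). apply cont_ex, Cont_gs.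
  - apply Cont_gs.
Qed.

Lemma uf_deriv x t : is_derive (fun u => uf u t) x (- 2 * x * exp (- (x * x) * (1 + t * t))).
Proof.
  unfold uf. auto_derive. nra. field. nra.
Qed.

Lemma Uf_deriv x : is_derive Uf x (RInt (fun t => - 2 * x * exp (- (x * x) * (1 + t * t))) 0 1).
Proof.
  unfold Uf.
  replace (RInt (fun t => - 2 * x * exp (- (x * x) * (1 + t * t))) 0 1)
    with (RInt (fun t => Derive (fun u => uf u t) x) 0 1).
  2:{ apply RInt_ext. intros t _. apply is_derive_unique, uf_deriv. }
  apply (is_derive_RInt_param uf 0 1 x).
  - apply filter_forall. intros y t _. eexists. apply uf_deriv.
  - intros t _.
    apply (continuity_2d_pt_ext (fun u v => - 2 * u * exp (- (u * u) * (1 + v * v)))).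
    { intros u v. symmetry. apply is_derive_unique, uf_deriv. }
    apply continuity_2d_pt_mult.
    apply continuity_2d_pt_mult. apply continuity_2d_pt_const. apply continuity_2d_pt_id1.
    apply (continuity_1d_2d_pt_comp exp). apply derivable_continuous_pt, derivable_pt_exp.
    apply continuity_2d_pt_mult. apply continuity_2d_pt_opp.
    apply continuity_2d_pt_mult; apply continuity_2d_pt_id1.
    apply continuity_2d_pt_plus. apply continuity_2d_pt_const.
    apply continuity_2d_pt_mult; apply continuity_2d_pt_id2.
  - apply filter_forall. intros y. apply cont_ex, cont_uf.
Qed.

Lemma Uf_deriv2 x : RInt (fun t => - 2 * x * exp (- (x * x) * (1 + t * t))) 0 1 = - 2 * exp (- (x * x)) * Ig x.
Proof.
  pose proof (RInt_comp_lin gs x 0 0 1 (cont_ex gs _ _ Cont_gs)) as E.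
  replace (x * 0 + 0) with 0 in E by ring. replace (x * 1 + 0) with x in E by ring.
  unfold Ig.
  assert (E2 : RInt (fun y : R => scal x (gs (x * y + 0))) 0 1 = RInt (fun y => x * exp (- ((x * y) * (x * y)))) 0 1).
  { apply RInt_ext. intros t _. unfold gs. change (scal x ?A) with (x * A). f_equal. f_equal. f_equal. ring. }
  assert (E3 : RInt gs 0 x = RInt (fun y => x * exp (- ((x * y) * (x * y)))) 0 1).
  { etransitivity. symmetry. exact E. exact E2. }
  rewrite E3.
  rewrite <- RInt_scal_R.
  2:{ apply cont_ex, cont_of_pt; intros t; reg. }
  apply RInt_ext. intros t _.
  replace (- (x * x) * (1 + t * t)) with (- (x * x) + - ((x * t) * (x * t))) by ring.
  rewrite exp_plus. req; ring.
Qed.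

Definition hg (x : R) : R := Ig x * Ig x + Uf x.

Lemma hg_deriv x : is_derive hg x 0.
Proof.
  unfold hg.
  replace 0 with (gs x * Ig x + Ig x * gs x + (- 2 * exp (- (x * x)) * Ig x)).
  2:{ unfold gs; ring. }
  apply (is_derive_plus (fun y => Ig y * Ig y) Uf).
  - apply (is_derive_mult Ig Ig); try apply Ig_deriv. intros; apply Rmult_comm.
  - rewrite <- Uf_deriv2. apply Uf_deriv.
Qed.

Lemma hg_const x : hg x = hg 0.
Proof.
  assert (H : is_RInt (fun _ => 0) 0 x (minus (hg x) (hg 0))).
  { apply (is_RInt_derive (V:=R_CompleteNormedModule)). intros; apply hg_deriv. intros; apply continuous_const. }
  apply (is_RInt_unique (V:=R_CompleteNormedModule)) in H. rewrite RInt_const in H.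
  change (scal (x - 0) 0) with ((x - 0) * 0) in H. change (minus (hg x) (hg 0)) with (hg x + - hg 0) in H.
  lra.
Qed.

Lemma hg0 : hg 0 = PI / 4.
Proof.
  unfold hg, Ig. rewrite RInt_point. change (@zero R_AbsRing) with 0.
  unfold Uf.
  assert (E : RInt (fun t => uf 0 t) 0 1 = RInt (fun t => / (1 + t ^ 2)) 0 1).
  { apply RInt_ext. intros t _. unfold uf. replace (- (0 * 0) * (1 + t * t)) with 0 by ring.
    rewrite exp_0. simpl. field. nra. }
  rewrite E.
  assert (H : is_RInt (fun t => / (1 + t ^ 2)) 0 1 (minus (atan 1) (atan 0))).
  { apply (is_RInt_derive (V:=R_CompleteNormedModule)). intros y _. 
    replace (y ^ 2) with (y²) by (unfold Rsqr; ring). apply is_derive_atan.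
    intros y _. apply continuity_pt_filterlim. reg. nra. }
  apply (is_RInt_unique (V:=R_CompleteNormedModule)) in H. rewrite H. rewrite atan_1, atan_0.
  change (minus (PI/4) 0) with (PI/4 + - 0). unfold zero; simpl. req. ring.
Qed.


Lemma exp_neg_le y : 0 <= y -> exp (- y) <= / (1 + y).
Proof.
  intros Hy. pose proof (exp_ineq1_le y).
  rewrite exp_Ropp. apply Rinv_le_contravar; lra.
Qed.

Lemma gs_pos x : 0 < gs x.
Proof. unfold gs; apply exp_pos. Qed.

Lemma gs_le1 x : gs x <= 1.
Proof. unfold gs. rewrite <- exp_0. destruct (Req_dec x 0). subst; right; f_equal; ring.
  left; apply exp_increasing; nra. Qed.

Lemma gs_dom x : gs x <= 1 / (1 + x ^ 2).
Proof. unfold gs. eapply Rle_trans. apply exp_neg_le. nra. right. simpl. field. nra. Qed.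

Lemma Uf_bounds x : 0 <= Uf x <= exp (- (x * x)).
Proof.
  unfold Uf. split.
  - apply RInt_ge_0. lra. apply cont_ex, cont_uf. intros t _. unfold uf.
    apply Rlt_le, Rdiv_lt_0_compat. apply exp_pos. nra.
  - apply Rle_trans with (RInt (fun _ => exp (- (x * x))) 0 1).
    apply RInt_le. lra. apply cont_ex, cont_uf. apply cont_ex, Cont_const.
    intros t Ht. unfold uf. 
    apply Rle_trans with (exp (- (x * x) * (1 + t * t))).
    { unfold Rdiv. rewrite <- (Rmult_1_r (exp _)) at 2. apply Rmult_le_compat_l.
      apply Rlt_le, exp_pos. rewrite <- Rinv_1. apply Rinv_le_contravar; nra. }
    destruct (Req_dec (x * x * (t * t)) 0) as [E|E].
    { right. f_equal. nra. }
    left; apply exp_increasing. nra.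
    rewrite RInt_const. change (scal (1 - 0) (exp (- (x * x)))) with ((1 - 0) * exp (- (x * x))). lra.
Qed.

Lemma Ig_ge0 x : 0 <= x -> 0 <= Ig x.
Proof. intros H. unfold Ig. apply RInt_ge_0; auto. apply cont_ex, Cont_gs. intros; apply Rlt_le, gs_pos. Qed.

Lemma Ig_sq x : Ig x * Ig x = PI / 4 - Uf x.
Proof. pose proof (hg_const x). rewrite hg0 in H. unfold hg in H. lra. Qed.

Lemma gs_sym M : RInt gs (- M) M = 2 * Ig M.
Proof.
  pose proof (RInt_comp_lin gs (-1) 0 0 M (cont_ex gs _ _ Cont_gs)) as E.
  assert (E2 : RInt (fun y : R => scal (-1) (gs (-1 * y + 0))) 0 M = - Ig M).
  { replace (- Ig M) with (-1 * Ig M) by ring. unfold Ig. rewrite <- (RInt_scal_R gs (-1)) by (apply cont_ex, Cont_gs).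
    apply RInt_ext. intros t _. change (scal (-1) ?A) with (-1 * A). unfold gs. req.
    replace (-1 * t + 0) with (- t) by ring. replace (- t * - t) with (t * t) by ring. ring. }
  assert (E3 : RInt gs (-1 * 0 + 0) (-1 * M + 0) = - Ig M).
  { etransitivity. symmetry. exact E. exact E2. }
  replace (-1 * 0 + 0) with 0 in E3 by ring. replace (-1 * M + 0) with (- M) in E3 by ring.
  rewrite <- (RInt_Chasles gs (- M) 0 M) by (apply cont_ex, Cont_gs).
  rewrite <- (opp_RInt_swap gs) by (apply cont_ex, Cont_gs).
  change (plus (opp (RInt gs 0 (- M))) (RInt gs 0 M) = 2 * Ig M).
  unfold Ig in *. rewrite E3. unfold plus, opp; simpl. req. ring.
Qed.

Lemma sqrtPI_gt1 : 1 < sqrt PI.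
Proof.
  rewrite <- sqrt_1. apply sqrt_lt_1_alt. pose proof PI_RGT_0. pose proof (PI_4). split. lra.
  pose proof PI2_1. lra.
Qed.

Lemma gauss_bound M : 0 <= M -> Rabs (RInt gs (- M) M - sqrt PI) <= 4 * exp (- (M * M)).
Proof.
  intros HM. rewrite gs_sym.
  pose proof (Ig_ge0 M HM). pose proof (Ig_sq M). pose proof (Uf_bounds M).
  pose proof sqrtPI_gt1. pose proof (sqrt_sqrt PI (Rlt_le _ _ PI_RGT_0)).
  set (I := Ig M) in *. set (U := Uf M) in *. set (r := sqrt PI) in *.
  assert (2 * I <= r) by nra.
  rewrite Rabs_left1 by lra.
  assert ((r - 2 * I) * (r + 2 * I) = 4 * U) by nra.
  nra.
Qed.

Lemma exp_small K eps : 0 <= K -> 0 < eps -> exists M0, 0 <= M0 /\ forall M, M0 <= M -> K * exp (- (M * M)) < eps.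
Proof.
  intros HK He. exists (Rmax 1 ((K + 1) / eps)). split. pose proof (Rmax_l 1 ((K+1)/eps)); lra.
  intros M HM. pose proof (Rmax_l 1 ((K+1)/eps)). pose proof (Rmax_r 1 ((K+1)/eps)).
  assert (H1 : exp (- (M * M)) <= / (1 + M * M)) by (apply exp_neg_le; nra).
  assert (H2 : (K + 1) / eps <= M) by lra.
  assert (H3 : K + 1 <= eps * M).
  { apply (Rmult_le_reg_r (/ eps)). apply Rinv_0_lt_compat; auto.
    replace (eps * M * / eps) with M by (field; lra). exact H2. }
  apply Rle_lt_trans with (K * / (1 + M * M)). apply Rmult_le_compat_l; auto.
  apply (Rmult_lt_reg_r (1 + M * M)). nra. rewrite Rmult_assoc, Rinv_l by nra. nra.
Qed.


Lemma RInt_odd f M : Cont f -> (forall x, f (- x) = - f x) -> RInt f (- M) M = 0.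
Proof.
  intros Cf Ho.
  pose proof (RInt_comp_lin f (-1) 0 (- M) M (cont_ex f _ _ Cf)) as E.
  assert (E2 : RInt (fun y : R => scal (-1) (f (-1 * y + 0))) (- M) M = RInt f (- M) M).
  { apply RInt_ext. intros t _. change (scal (-1) ?A) with (-1 * A).
    replace (-1 * t + 0) with (- t) by ring. rewrite Ho. req. ring. }
  assert (E3 : RInt f (- M) M = RInt f (-1 * - M + 0) (-1 * M + 0)).
  { etransitivity. symmetry. exact E2. exact E. }
  replace (-1 * - M + 0) with M in E3 by ring. replace (-1 * M + 0) with (- M) in E3 by ring.
  rewrite <- (opp_RInt_swap f (- M) M) in E3 by (apply cont_ex; auto).
  change (RInt f (- M) M = - RInt f (- M) M) in E3. lra.
Qed.

Definition Jc (b M : R) : R := RInt (fun x => gs x * cos (b * x)) (- M) M.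

Lemma Cont_gcos b : Cont (fun x => gs x * cos (b * x)).
Proof. apply cont_of_pt; intros x; unfold gs; reg. Qed.
Lemma Cont_gsin b : Cont (fun x => gs x * sin (b * x)).
Proof. apply cont_of_pt; intros x; unfold gs; reg. Qed.

Lemma jf_deriv x b : is_derive (fun c => gs x * cos (c * x)) b (- x * gs x * sin (b * x)).
Proof. unfold gs. auto_derive. auto. ring. Qed.

Lemma Jc_deriv b M : is_derive (fun c => Jc c M) b (RInt (fun x => - x * gs x * sin (b * x)) (- M) M).
Proof.
  unfold Jc.
  replace (RInt (fun x => - x * gs x * sin (b * x)) (- M) M)
    with (RInt (fun x => Derive (fun c => gs x * cos (c * x)) b) (- M) M).
  2:{ apply RInt_ext. intros t _. apply is_derive_unique, jf_deriv. }
  apply (is_derive_RInt_param (fun c x => gs x * cos (c * x)) (- M) M b).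
  - apply filter_forall. intros y t _. eexists. apply jf_deriv.
  - intros t _.
    apply (continuity_2d_pt_ext (fun u v => - v * exp (- (v * v)) * sin (u * v))).
    { intros u v. symmetry. apply is_derive_unique, jf_deriv. }
    apply continuity_2d_pt_mult.
    apply continuity_2d_pt_mult. apply continuity_2d_pt_opp. apply continuity_2d_pt_id2.
    apply (continuity_1d_2d_pt_comp exp). apply derivable_continuous_pt, derivable_pt_exp.
    apply continuity_2d_pt_opp. apply continuity_2d_pt_mult; apply continuity_2d_pt_id2.
    apply (continuity_1d_2d_pt_comp sin). apply derivable_continuous_pt, derivable_pt_sin.
    apply continuity_2d_pt_mult. apply continuity_2d_pt_id1. apply continuity_2d_pt_id2.
  - apply filter_forall. intros y. apply cont_ex, Cont_gcos.
Qed.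

Lemma gs_opp x : gs (- x) = gs x.
Proof. unfold gs. f_equal. ring. Qed.

Lemma ibp b M : RInt (fun x => - x * gs x * sin (b * x)) (- M) M = gs M * sin (b * M) - b / 2 * Jc b M.
Proof.
  assert (H : is_RInt (fun x => - 2 * x * gs x * sin (b * x) + b * (gs x * cos (b * x))) (- M) M
             (minus ((fun x => gs x * sin (b * x)) M) ((fun x => gs x * sin (b * x)) (- M)))).
  { apply (is_RInt_derive (V:=R_CompleteNormedModule) (fun x => gs x * sin (b * x))).
    - intros x _. unfold gs. auto_derive. auto. ring.
    - intros x _. apply continuity_pt_filterlim. unfold gs. reg. }
  apply (is_RInt_unique (V:=R_CompleteNormedModule)) in H.
  rewrite RInt_plus_R in H.
  2:{ apply cont_ex, cont_of_pt; intros x; unfold gs; reg. }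
  2:{ apply cont_ex, cont_of_pt; intros x; unfold gs; reg. }
  rewrite (RInt_scal_R _ b) in H by (apply cont_ex, Cont_gcos).
  assert (E : RInt (fun x => - 2 * x * gs x * sin (b * x)) (- M) M = 2 * RInt (fun x => - x * gs x * sin (b * x)) (- M) M).
  { rewrite <- RInt_scal_R. apply RInt_ext. intros; req; ring. apply cont_ex, cont_of_pt; intros x; unfold gs; reg. }
  rewrite E in H. fold (Jc b M) in H.
  change (minus (gs M * sin (b * M)) (gs (- M) * sin (b * - M))) with
    (gs M * sin (b * M) + - (gs (- M) * sin (b * - M))) in H.
  rewrite gs_opp in H. replace (b * - M) with (- (b * M)) in H by ring. rewrite sin_neg in H.
  lra.
Qed.

Lemma exp_mono x y : x <= y -> exp x <= exp y.
Proof. intros [H|H]. left; apply exp_increasing; auto. subst; right; auto. Qed.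

Definition PJ (M b : R) : R := exp (b * b / 4) * Jc b M.

Lemma PJ_deriv M b : is_derive (PJ M) b (exp (b * b / 4) * gs M * sin (b * M)).
Proof.
  unfold PJ.
  replace (exp (b * b / 4) * gs M * sin (b * M)) with
    (exp (b * b / 4) * (b / 2) * Jc b M + exp (b * b / 4) * RInt (fun x => - x * gs x * sin (b * x)) (- M) M).
  2:{ rewrite ibp. ring. }
  apply (is_derive_mult (fun c => exp (c * c / 4)) (fun c => Jc c M)).
  - auto_derive. auto. req. unfold Rdiv. field.
  - apply Jc_deriv.
  - intros; apply Rmult_comm.
Qed.

Lemma PJ_diff M b : 0 <= b -> Rabs (PJ M b - PJ M 0) <= b * (exp (b * b / 4) * gs M).
Proof.
  intros Hb.
  assert (H : is_RInt (fun c => exp (c * c / 4) * gs M * sin (c * M)) 0 b (minus (PJ M b) (PJ M 0))).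
  { apply (is_RInt_derive (V:=R_CompleteNormedModule)).
    - intros x _. apply PJ_deriv.
    - intros x _. apply continuity_pt_filterlim. reg. }
  apply (is_RInt_unique (V:=R_CompleteNormedModule)) in H.
  change (minus (PJ M b) (PJ M 0)) with (PJ M b + - PJ M 0) in H.
  replace (PJ M b - PJ M 0) with (PJ M b + - PJ M 0) by ring. rewrite <- H.
  replace b with (b - 0) at 2 by ring.
  apply abs_RInt_le_const. auto. apply cont_ex, cont_of_pt; intros x; reg.
  intros t Ht. rewrite !Rabs_mult. rewrite (Rabs_right (exp _)) by (apply Rle_ge, Rlt_le, exp_pos).
  rewrite (Rabs_right (gs M)) by (apply Rle_ge, Rlt_le, gs_pos).
  assert (S : Rabs (sin (t * M)) <= 1) by (apply Rabs_le; apply SIN_bound).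
  assert (X : exp (t * t / 4) <= exp (b * b / 4)) by (apply exp_mono; nra).
  pose proof (gs_pos M). pose proof (exp_pos (t * t / 4)). pose proof (Rabs_pos (sin (t * M))).
  apply Rle_trans with (exp (t * t / 4) * gs M * 1). apply Rmult_le_compat_l; nra. nra.
Qed.

Lemma Jc0 M : Jc 0 M = RInt gs (- M) M.
Proof. unfold Jc. apply RInt_ext. intros x _. rewrite Rmult_0_l, cos_0. req. ring. Qed.

Lemma Jc_even b M : Jc (- b) M = Jc b M.
Proof. unfold Jc. apply RInt_ext. intros x _. replace (- b * x) with (- (b * x)) by ring. rewrite cos_neg. reflexivity. Qed.

Lemma Jc_bound_pos b M : 0 <= b -> 0 <= M ->
  Rabs (Jc b M - sqrt PI * exp (- (b * b) / 4)) <= (b + 4) * exp (- (M * M)).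
Proof.
  intros Hb HM.
  set (e := exp (- (b * b) / 4)).
  assert (He : e * exp (b * b / 4) = 1).
  { unfold e. rewrite <- exp_plus. replace (- (b * b) / 4 + b * b / 4) with 0 by field. apply exp_0. }
  assert (He1 : 0 < e <= 1).
  { unfold e. split. apply exp_pos. rewrite <- exp_0. apply exp_mono. nra. }
  assert (E1 : Jc b M = e * PJ M b). { unfold PJ. rewrite <- Rmult_assoc, He. ring. }
  assert (E2 : PJ M 0 = RInt gs (- M) M). { unfold PJ. rewrite Jc0. replace (0 * 0 / 4) with 0 by field. rewrite exp_0. ring. }
  pose proof (PJ_diff M b Hb) as D. pose proof (gauss_bound M HM) as G.
  rewrite E2 in D.
  replace (Jc b M - sqrt PI * e) with (e * (PJ M b - RInt gs (- M) M) + e * (RInt gs (- M) M - sqrt PI)) by (rewrite E1; ring).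
  eapply Rle_trans. apply Rabs_triang. rewrite !Rabs_mult, (Rabs_right e) by lra.
  assert (gs M = exp (- (M * M))) by reflexivity.
  assert (A : e * Rabs (PJ M b - RInt gs (- M) M) <= b * gs M).
  { apply Rle_trans with (e * (b * (exp (b * b / 4) * gs M))). apply Rmult_le_compat_l; lra.
    right. replace (e * (b * (exp (b * b / 4) * gs M))) with ((e * exp (b * b / 4)) * (b * gs M)) by ring.
    rewrite He. ring. }
  assert (B : e * Rabs (RInt gs (- M) M - sqrt PI) <= 4 * exp (- (M * M))).
  { apply Rle_trans with (1 * Rabs (RInt gs (- M) M - sqrt PI)). apply Rmult_le_compat_r. apply Rabs_pos. lra. lra. }
  rewrite H in A. lra.
Qed.

Lemma Jc_bound b M : 0 <= M ->
  Rabs (Jc b M - sqrt PI * exp (- (b * b) / 4)) <= (Rabs b + 4) * exp (- (M * M)).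
Proof.
  intros HM. destruct (Rle_dec 0 b).
  - rewrite (Rabs_right b) by lra. apply Jc_bound_pos; auto.
  - rewrite (Rabs_left b) by lra. rewrite <- Jc_even. replace (b * b) with (- b * - b) by ring.
    apply Jc_bound_pos; auto; lra.
Qed.

Lemma Jcos_IMP b : IMP (fun x => gs x * cos (b * x)) (sqrt PI * exp (- (b * b) / 4)).
Proof.
  apply (sym_tail _ 1). apply Cont_gcos. lra.
  - intros x. rewrite Rabs_mult. rewrite (Rabs_right (gs x)) by (apply Rle_ge, Rlt_le, gs_pos).
    apply Rle_trans with (gs x * 1). apply Rmult_le_compat_l. apply Rlt_le, gs_pos. apply Rabs_le, COS_bound.
    rewrite Rmult_1_r. apply gs_dom.
  - intros eps Heps. destruct (exp_small (Rabs b + 4) eps) as [M0 [HM0 K]]. pose proof (Rabs_pos b); lra. auto.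
    exists M0. intros M HM. eapply Rle_lt_trans. apply (Jc_bound b M). lra. apply K; auto.
Qed.

Lemma Jsin_IMP b : IMP (fun x => gs x * sin (b * x)) 0.
Proof.
  apply (sym_tail _ 1). apply Cont_gsin. lra.
  - intros x. rewrite Rabs_mult. rewrite (Rabs_right (gs x)) by (apply Rle_ge, Rlt_le, gs_pos).
    apply Rle_trans with (gs x * 1). apply Rmult_le_compat_l. apply Rlt_le, gs_pos. apply Rabs_le, SIN_bound.
    rewrite Rmult_1_r. apply gs_dom.
  - intros eps Heps. exists 0. intros M _. rewrite RInt_odd. rewrite Rminus_0_r, Rabs_R0; auto.
    apply Cont_gsin. intros x. rewrite gs_opp. replace (b * - x) with (- (b * x)) by ring. rewrite sin_neg. ring.
Qed.


Definition gc (s m be ga t : R) : R := exp (- ((t - m) * (t - m)) / (s * s)) * cos (be * t + ga).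
Definition GC (s m be ga : R) : R := s * (sqrt PI * exp (- (be * s * (be * s)) / 4) * cos (be * m + ga)).

Lemma Cont_gc s m be ga : 0 < s -> Cont (gc s m be ga).
Proof. intros Hs. apply cont_of_pt; intros t; unfold gc. reg. Qed.

Lemma L1 s m be ga : 0 < s -> IMP (gc s m be ga) (GC s m be ga).
Proof.
  intros Hs.
  set (c := cos (be * m + ga)). set (sn := sin (be * m + ga)).
  set (phi := fun x => c * (gs x * cos (be * s * x)) + - sn * (gs x * sin (be * s * x))).
  assert (Cp : Cont phi).
  { apply cont_of_pt; intros x; unfold phi, gs; reg. }
  assert (Ip : IMP phi (c * (sqrt PI * exp (- (be * s * (be * s)) / 4)) + - sn * 0)).
  { apply IMP_plus. apply cont_of_pt; intros x; unfold gs; reg. apply cont_of_pt; intros x; unfold gs; reg.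
    apply IMP_scal. apply Cont_gcos. apply Jcos_IMP.
    apply IMP_scal. apply Cont_gsin. apply Jsin_IMP. }
  apply (IMP_lin phi s m) in Ip; auto.
  unfold GC. replace (s * (sqrt PI * exp (- (be * s * (be * s)) / 4) * cos (be * m + ga))) with
    (s * (c * (sqrt PI * exp (- (be * s * (be * s)) / 4)) + - sn * 0)) by (unfold c; ring).
  revert Ip. apply IMP_ext. intros t. unfold phi, gc, gs.
  replace (- ((t - m) / s * ((t - m) / s))) with (- ((t - m) * (t - m)) / (s * s)) by (field; lra).
  replace (be * s * ((t - m) / s)) with (be * (t - m)) by (field; lra).
  replace (be * t + ga) with ((be * m + ga) + be * (t - m)) by ring.
  rewrite cos_plus. unfold c, sn. ring.
Qed.


Lemma rot_sq x y th u v : rotU x y th u v ^ 2 + rotV x y th u v ^ 2 = (u - x) ^ 2 + (v - y) ^ 2.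
Proof.
  unfold rotU, rotV. pose proof (sin2_cos2 th) as H. unfold Rsqr in H.
  transitivity (((u - x) ^ 2 + (v - y) ^ 2) * (sin th * sin th + cos th * cos th)). ring.
  rewrite H. ring.
Qed.

Lemma diff_sq_form lam sig x1 y1 t1 x2 y2 t2 u v :
  gabor_diff_sq lam sig x1 y1 t1 x2 y2 t2 u v =
  let a1 := rotU x1 y1 t1 u v in let b1 := rotV x1 y1 t1 u v in
  let a2 := rotU x2 y2 t2 u v in let b2 := rotV x2 y2 t2 u v in
  let E1 := exp (- (a1 ^ 2 + b1 ^ 2) / (2 * sig ^ 2)) in
  let E2 := exp (- (a2 ^ 2 + b2 ^ 2) / (2 * sig ^ 2)) in
  E1 * E1 + E2 * E2 - 2 * (E1 * E2) * cos (2 * PI * a1 / lam - 2 * PI * a2 / lam).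
Proof.
  unfold gabor_diff_sq, gabor_re, gabor_im, psi0_re, psi0_im. cbv zeta.
  set (a1 := rotU x1 y1 t1 u v). set (b1 := rotV x1 y1 t1 u v).
  set (a2 := rotU x2 y2 t2 u v). set (b2 := rotV x2 y2 t2 u v).
  set (E1 := exp (- (a1 ^ 2 + b1 ^ 2) / (2 * sig ^ 2))).
  set (E2 := exp (- (a2 ^ 2 + b2 ^ 2) / (2 * sig ^ 2))).
  set (p := 2 * PI * a1 / lam). set (q := 2 * PI * a2 / lam).
  rewrite cos_minus.
  pose proof (sin2_cos2 p) as H1. pose proof (sin2_cos2 q) as H2. unfold Rsqr in H1, H2.
  transitivity (E1 * E1 * (sin p * sin p + cos p * cos p) + E2 * E2 * (sin q * sin q + cos q * cos q)
     - 2 * (E1 * E2) * (cos p * cos q + sin p * sin q)). ring.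
  rewrite H1, H2. ring.
Qed.

Definition gx (s m t : R) : R := exp (- ((t - m) * (t - m)) / (s * s)).

Lemma gc00 s m t : gc s m 0 0 t = gx s m t.
Proof. unfold gc, gx. rewrite Rmult_0_l, Rplus_0_r, cos_0. ring. Qed.

Lemma GC00 s m : GC s m 0 0 = s * sqrt PI.
Proof. unfold GC. replace (- (0 * s * (0 * s)) / 4) with 0 by field. replace (0 * m + 0) with 0 by ring.
  rewrite exp_0, cos_0. ring. Qed.

Section TwoD.
Variables (lam sig x1 y1 t1 x2 y2 t2 : R).
Hypothesis Hlam : 0 < lam.
Hypothesis Hsig : 0 < sig.

Definition kap := 2 * PI / lam.
Definition bx := kap * (cos t1 - cos t2).
Definition by_ := kap * (sin t1 - sin t2).
Definition g0 := kap * (- (x1 * cos t1 + y1 * sin t1) + (x2 * cos t2 + y2 * sin t2)).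
Definition mx := (x1 + x2) / 2.
Definition my := (y1 + y2) / 2.
Definition Kc := exp (- ((x1 - x2) ^ 2 + (y1 - y2) ^ 2) / (4 * sig ^ 2)).

Lemma pointwise u v :
  gabor_diff_sq lam sig x1 y1 t1 x2 y2 t2 u v =
  gx sig x1 u * gc sig y1 0 0 v + gx sig x2 u * gc sig y2 0 0 v
  + (- 2 * Kc * gx sig mx u) * gc sig my by_ (bx * u + g0) v.
Proof.
  rewrite diff_sq_form. cbv zeta. rewrite !gc00.
  rewrite !rot_sq.
  assert (Hs2 : sig * sig <> 0) by nra. assert (Hs0 : sig <> 0) by (apply Rgt_not_eq; auto).
  assert (A1 : exp (- ((u - x1) ^ 2 + (v - y1) ^ 2) / (2 * sig ^ 2)) * exp (- ((u - x1) ^ 2 + (v - y1) ^ 2) / (2 * sig ^ 2))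
     = gx sig x1 u * gx sig y1 v).
  { unfold gx. rewrite <- !exp_plus. f_equal. field; auto. }
  assert (A2 : exp (- ((u - x2) ^ 2 + (v - y2) ^ 2) / (2 * sig ^ 2)) * exp (- ((u - x2) ^ 2 + (v - y2) ^ 2) / (2 * sig ^ 2))
     = gx sig x2 u * gx sig y2 v).
  { unfold gx. rewrite <- !exp_plus. f_equal. field; auto. }
  assert (A3 : exp (- ((u - x1) ^ 2 + (v - y1) ^ 2) / (2 * sig ^ 2)) * exp (- ((u - x2) ^ 2 + (v - y2) ^ 2) / (2 * sig ^ 2))
     = Kc * gx sig mx u * gx sig my v).
  { unfold gx, Kc, mx, my. rewrite <- !exp_plus. f_equal. field; auto. }
  rewrite A1, A2, A3.
  assert (A4 : 2 * PI * rotU x1 y1 t1 u v / lam - 2 * PI * rotU x2 y2 t2 u v / lam = by_ * v + (bx * u + g0)).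
  { unfold by_, bx, g0, kap, rotU. field. lra. }
  rewrite A4. unfold gc. fold (gx sig my v). ring.
Qed.

Definition Fin (u : R) : R :=
  gx sig x1 u * GC sig y1 0 0 + gx sig x2 u * GC sig y2 0 0
  + (- 2 * Kc * gx sig mx u) * GC sig my by_ (bx * u + g0).

Lemma Cont_gx s m : 0 < s -> Cont (gx s m).
Proof. intros Hs. apply cont_of_pt; intros t; unfold gx; reg. Qed.

Lemma inner u : IMP (fun v => gabor_diff_sq lam sig x1 y1 t1 x2 y2 t2 u v) (Fin u).
Proof.
  apply (IMP_ext (fun v => gx sig x1 u * gc sig y1 0 0 v + gx sig x2 u * gc sig y2 0 0 v
  + (- 2 * Kc * gx sig mx u) * gc sig my by_ (bx * u + g0) v)).
  { intros v; symmetry; apply pointwise. }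
  unfold Fin.
  apply IMP_plus. apply Cont_plus; apply Cont_mult; try apply Cont_const; apply Cont_gc; auto.
  apply Cont_mult. apply Cont_const. apply Cont_gc; auto.
  apply IMP_plus. apply Cont_mult. apply Cont_const. apply Cont_gc; auto.
  apply Cont_mult. apply Cont_const. apply Cont_gc; auto.
  apply IMP_scal. apply Cont_gc; auto. apply L1; auto.
  apply IMP_scal. apply Cont_gc; auto. apply L1; auto.
  apply IMP_scal. apply Cont_gc; auto. apply L1; auto.
Qed.

Definition ey := exp (- (by_ * sig * (by_ * sig)) / 4).

Definition Lout : R :=
  sig * sqrt PI * GC sig x1 0 0 + sig * sqrt PI * GC sig x2 0 0
  + (- 2 * Kc * (sig * (sqrt PI * ey))) * GC sig mx bx (by_ * my + g0).

Lemma outer : IMP Fin Lout.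
Proof.
  apply (IMP_ext (fun u => sig * sqrt PI * gc sig x1 0 0 u + sig * sqrt PI * gc sig x2 0 0 u
     + (- 2 * Kc * (sig * (sqrt PI * ey))) * gc sig mx bx (by_ * my + g0) u)).
  { intros u. unfold Fin. rewrite !GC00, !gc00. unfold GC, gc, ey, gx.
    replace (by_ * my + (bx * u + g0)) with (bx * u + (by_ * my + g0)) by ring. ring. }
  unfold Lout.
  apply IMP_plus. apply Cont_plus; apply Cont_mult; try apply Cont_const; apply Cont_gc; auto.
  apply Cont_mult. apply Cont_const. apply Cont_gc; auto.
  apply IMP_plus. apply Cont_mult. apply Cont_const. apply Cont_gc; auto.
  apply Cont_mult. apply Cont_const. apply Cont_gc; auto.
  apply IMP_scal. apply Cont_gc; auto. apply L1; auto.
  apply IMP_scal. apply Cont_gc; auto. apply L1; auto.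
  apply IMP_scal. apply Cont_gc; auto. apply L1; auto.
Qed.

Definition Lval : R :=
  2 * PI * sig ^ 2 * (1 - Kc * exp (- (sig ^ 2 * (bx ^ 2 + by_ ^ 2)) / 4) * cos (bx * mx + by_ * my + g0)).

Lemma Lout_val : Lout = Lval.
Proof.
  unfold Lout, Lval. rewrite !GC00. unfold GC, ey.
  pose proof (sqrt_sqrt PI (Rlt_le _ _ PI_RGT_0)) as S.
  replace (exp (- (sig ^ 2 * (bx ^ 2 + by_ ^ 2)) / 4)) with
    (exp (- (by_ * sig * (by_ * sig)) / 4) * exp (- (bx * sig * (bx * sig)) / 4)).
  2:{ rewrite <- exp_plus. f_equal. field. }
  replace (bx * mx + by_ * my + g0) with (bx * mx + (by_ * my + g0)) by ring.
  transitivity (2 * (sig * sig) * (sqrt PI * sqrt PI) * (1 - Kc * (exp (- (by_ * sig * (by_ * sig)) / 4) * exp (- (bx * sig * (bx * sig)) / 4)) * cos (bx * mx + (by_ * my + g0)))). ring.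
  rewrite S. ring.
Qed.

Lemma gabor_val : gabor_dist_sq lam sig x1 y1 t1 x2 y2 t2 Lval.
Proof.
  exists Fin. split.
  - intros u. apply IMP_improper. 
    apply (fun H => cont_of_pt _ H). intros v. 
    apply (continuity_pt_ext (fun v => gx sig x1 u * gc sig y1 0 0 v + gx sig x2 u * gc sig y2 0 0 v
        + (- 2 * Kc * gx sig mx u) * gc sig my by_ (bx * u + g0) v)).
    { intros w; symmetry; apply pointwise. }
    apply pt_of_cont. apply Cont_plus. apply Cont_plus; apply Cont_mult; try apply Cont_const; apply Cont_gc; auto.
    apply Cont_mult. apply Cont_const. apply Cont_gc; auto.
    apply inner.
  - rewrite <- Lout_val. apply IMP_improper.
    unfold Fin, GC, gx. apply cont_of_pt; intros u; reg.
    apply outer.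
Qed.

End TwoD.


Lemma abs_le_of x y : - y <= x <= y -> Rabs x <= y.
Proof. intros; apply Rabs_le; lra. Qed.

Lemma abs_inv x y : Rabs x <= y -> - y <= x <= y.
Proof. unfold Rabs; destruct (Rcase_abs x); lra. Qed.

Lemma sq_abs_le x n : 0 <= n -> x * x <= n * n -> Rabs x <= n.
Proof. intros H1 H2. apply Rabs_le; split; nra. Qed.

Lemma n4_le_n3 n : 0 <= n <= 1 -> n * n * (n * n) <= n * (n * n).
Proof. intros H. replace (n * n * (n * n)) with ((n * (n * n)) * n) by ring.
  rewrite <- (Rmult_1_r (n * (n * n))) at 2. apply Rmult_le_compat_l. 
  apply Rmult_le_pos; [lra|apply Rmult_le_pos; lra]. lra. Qed.

Lemma abs_kx k X : 0 < k -> Rabs (- k * X / 2) = k / 2 * Rabs X.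
Proof. intros H. replace (- k * X / 2) with (- (k / 2) * X) by field.
  rewrite Rabs_mult, Rabs_Ropp, (Rabs_right (k / 2)) by lra. auto. Qed.

Lemma core (dx dy D c s C1 S1 k sg n CD EA CP : R) :
  0 < k -> 0 < sg -> 0 <= n -> n <= 1 ->
  dx * dx + dy * dy + D * D = n * n ->
  Rabs (C1 - c) <= 2 * Rabs D -> Rabs (S1 - s) <= 2 * Rabs D ->
  Rabs C1 <= 1 -> Rabs S1 <= 1 -> Rabs c <= 1 -> Rabs s <= 1 ->
  0 <= CD - (1 - D * D / 2) <= D * D * (D * D) / 24 -> CD <= 1 ->
  forall B Ck A Phi A0 Phi0, B = 1 / (4 * sg * sg) ->
  Ck = sg * sg * (k * k) / 4 ->
  A = B * (dx * dx + dy * dy) + Ck * (2 - 2 * CD) ->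
  Phi = - k * ((C1 + c) * dx + (S1 + s) * dy) / 2 ->
  A0 = B * (dx * dx + dy * dy) + Ck * (D * D) ->
  Phi0 = - k * (c * dx + s * dy) ->
  (0 <= A -> 0 <= EA - (1 - A) <= A * A) ->
  (Rabs Phi <= 1 -> 0 <= CP - (1 - Phi * Phi / 2) <= Phi * Phi * (Phi * Phi) / 24) -> Rabs CP <= 1 ->
  2 * k * n <= 1 ->
  Rabs ((1 - EA * CP) - (A0 + Phi0 * Phi0 / 2)) <=
    ((B + Ck) * (B + Ck) + (1 + (B + Ck)) * (k * k * (k * k)) + 2 * (B + Ck) * (k * k) + Ck + 4 * (k * k)) * (n * (n * n)).
Proof.
  intros Hk Hsg Hn0 Hn1 Hn HC HS HC1 HS1 Hc Hs HCD HCD1 B Ck A Phi A0 Phi0 eB eCk eA ePhi eA0 ePhi0 HEA HCP HCPa Hkn.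
  assert (HB : 0 < B) by (rewrite eB; apply Rdiv_lt_0_compat; nra).
  assert (HCk : 0 <= Ck) by (rewrite eCk; apply Rmult_le_pos; [nra|lra]).
  remember (B + Ck) as a eqn:ea.
  assert (Hdx : Rabs dx <= n) by (apply sq_abs_le; nra).
  assert (Hdy : Rabs dy <= n) by (apply sq_abs_le; nra).
  assert (HD : Rabs D <= n) by (apply sq_abs_le; nra).
  assert (HD2 : D * D <= n * n) by nra.
  assert (Hxy : dx * dx + dy * dy <= n * n) by nra.
  assert (H2 : 0 <= 2 - 2 * CD <= D * D) by (split; lra).
  assert (HA : 0 <= A <= a * (n * n)).
  { rewrite eA, ea. split. apply Rplus_le_le_0_compat; apply Rmult_le_pos; nra. nra. }
  specialize (HEA (proj1 HA)).
  assert (HAA0 : Rabs (A - A0) <= Ck * (n * (n * n))).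
  { rewrite eA, eA0. apply abs_le_of.
    assert (E : 0 <= D * D - (2 - 2 * CD) <= D * D * (D * D) / 12) by (split; nra).
    assert (E2 : D * D * (D * D) / 12 <= n * (n * n)).
    { assert (0 <= D * D) by nra.
      assert (D * D * (D * D) <= n * n * (n * n)) by (apply Rmult_le_compat; lra).
      assert (n * n * (n * n) <= n * (n * n)) by (apply n4_le_n3; lra). lra. }
    split; nra. }
  assert (Hsum : Rabs dx + Rabs dy <= 2 * n) by lra.
  assert (HPhi : Rabs Phi <= k * (2 * n)).
  { rewrite ePhi. rewrite abs_kx by lra.
    assert (Rabs ((C1 + c) * dx + (S1 + s) * dy) <= 2 * (Rabs dx + Rabs dy)).
    { eapply Rle_trans. apply Rabs_triang. rewrite !Rabs_mult.
      pose proof (Rabs_triang C1 c). pose proof (Rabs_triang S1 s).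
      pose proof (Rabs_pos dx). pose proof (Rabs_pos dy). nra. }
    nra. }
  specialize (HCP ltac:(lra)).
  assert (HPhi0 : Rabs Phi0 <= k * (2 * n)).
  { rewrite ePhi0. rewrite Rabs_mult, Rabs_Ropp, (Rabs_right k) by lra.
    apply Rmult_le_compat_l. lra. eapply Rle_trans. apply Rabs_triang. rewrite !Rabs_mult.
    pose proof (Rabs_pos dx). pose proof (Rabs_pos dy). nra. }
  assert (HPP : Rabs (Phi - Phi0) <= k * (2 * (n * n))).
  { replace (Phi - Phi0) with (- k * ((C1 - c) * dx + (S1 - s) * dy) / 2) by (rewrite ePhi, ePhi0; field).
    rewrite abs_kx by lra.
    assert (Rabs ((C1 - c) * dx + (S1 - s) * dy) <= 4 * (n * n)).
    { eapply Rle_trans. apply Rabs_triang. rewrite !Rabs_mult.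
      pose proof (Rabs_pos dx). pose proof (Rabs_pos dy). pose proof (Rabs_pos D).
      pose proof (Rabs_pos (C1 - c)). pose proof (Rabs_pos (S1 - s)).
      assert (Rabs (C1 - c) * Rabs dx <= 2 * n * n) by nra.
      assert (Rabs (S1 - s) * Rabs dy <= 2 * n * n) by nra. nra. }
    nra. }
  assert (HPsq : Rabs (Phi * Phi - Phi0 * Phi0) <= 8 * (k * k) * (n * (n * n))).
  { replace (Phi * Phi - Phi0 * Phi0) with ((Phi - Phi0) * (Phi + Phi0)) by ring.
    rewrite Rabs_mult. pose proof (Rabs_triang Phi Phi0). pose proof (Rabs_pos (Phi - Phi0)).
    pose proof (Rabs_pos (Phi + Phi0)).
    apply Rle_trans with (k * (2 * (n * n)) * (k * (4 * n))). apply Rmult_le_compat; try lra.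
    right; ring. }
  assert (HP2 : Phi * Phi <= 4 * (k * k) * (n * n)).
  { assert (E : Phi * Phi = Rabs Phi * Rabs Phi) by (rewrite <- Rabs_mult; symmetry; apply Rabs_right; nra).
    rewrite E. pose proof (Rabs_pos Phi). apply Rle_trans with ((k * (2 * n)) * (k * (2 * n))).
    apply Rmult_le_compat; lra. right; ring. }
  assert (HP2' : 0 <= Phi * Phi) by nra.
  remember (EA - (1 - A)) as r1 eqn:er1. remember (CP - (1 - Phi * Phi / 2)) as r2 eqn:er2.
  assert (T1 : Rabs (EA * CP - 1 + A + Phi * Phi / 2) <= (a * a + (1 + a) * (k * k * (k * k)) + 2 * a * (k * k)) * (n * (n * n))).
  { replace (EA * CP - 1 + A + Phi * Phi / 2) with (r1 * CP + (1 - A) * r2 + A * (Phi * Phi) / 2)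
      by (rewrite er1, er2; field).
    assert (n4 : n * n * (n * n) <= n * (n * n)) by (apply n4_le_n3; lra).
    assert (B1 : Rabs (r1 * CP) <= a * a * (n * (n * n))).
    { rewrite Rabs_mult. apply Rle_trans with (A * A * 1). apply Rmult_le_compat; try apply Rabs_pos; auto.
      rewrite (Rabs_right r1) by lra. lra.
      assert (A * A <= a * (n * n) * (a * (n * n))) by (apply Rmult_le_compat; lra).
      assert (0 <= a * a) by nra.
      assert (a * a * (n * n * (n * n)) <= a * a * (n * (n * n))) by (apply Rmult_le_compat_l; lra).
      replace (a * (n * n) * (a * (n * n))) with (a * a * (n * n * (n * n))) in * by ring. lra. }
    assert (B2 : Rabs ((1 - A) * r2) <= (1 + a) * (k * k * (k * k)) * (n * (n * n))).
    { rewrite Rabs_mult. rewrite (Rabs_right r2) by lra. 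
      assert (Rabs (1 - A) <= 1 + a) by (apply abs_le_of; nra).
      assert (r2 <= 16 * (k * k * (k * k)) * (n * n * (n * n)) / 24) by nra.
      assert (r2 <= (k * k * (k * k)) * (n * (n * n))).
      { assert (0 <= k * k * (k * k)) by nra. nra. }
      pose proof (Rabs_pos (1 - A)). assert (0 <= r2) by lra. assert (0 <= k * k * (k * k)) by nra.
      apply Rle_trans with ((1 + a) * ((k * k * (k * k)) * (n * (n * n)))). apply Rmult_le_compat; lra. lra. }
    assert (B3 : Rabs (A * (Phi * Phi) / 2) <= 2 * a * (k * k) * (n * (n * n))).
    { rewrite Rabs_right. 2: { apply Rle_ge. apply Rmult_le_pos; [nra|lra]. }
      assert (A * (Phi * Phi) <= a * (n * n) * (4 * (k * k) * (n * n))) by (apply Rmult_le_compat; lra).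
      assert (0 <= a * (k * k)) by nra. nra. }
    eapply Rle_trans. apply Rabs_triang. eapply Rle_trans. apply Rplus_le_compat_r. apply Rabs_triang. lra. }
  replace ((1 - EA * CP) - (A0 + Phi0 * Phi0 / 2)) with
    (- (EA * CP - 1 + A + Phi * Phi / 2) + (A - A0) + (Phi * Phi - Phi0 * Phi0) / 2) by (rewrite ePhi, ePhi0; field).
  eapply Rle_trans. apply Rabs_triang. eapply Rle_trans. apply Rplus_le_compat_r. apply Rabs_triang.
  rewrite Rabs_Ropp.
  assert (Rabs ((Phi * Phi - Phi0 * Phi0) / 2) <= 4 * (k * k) * (n * (n * n))).
  { apply abs_le_of. apply abs_inv in HPsq. lra. }
  lra.
Qed.


Lemma cos_tay x : Rabs x <= 1 -> 0 <= cos x - (1 - x * x / 2) <= x * x * (x * x) / 24.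
Proof.
  intros H. apply abs_inv in H. pose proof PI2_1.
  destruct (cos_bound x 0) as [L U]. lra. lra.
  unfold cos_approx, cos_term in L, U. simpl in L, U.
  split.
  - eapply Rle_trans. 2: apply Rplus_le_compat_r, L. right. field.
  - eapply Rle_trans. apply Rplus_le_compat_r, U. right. field.
Qed.

Lemma sin_pos_bound x : 0 <= x <= 1 -> 0 <= sin x <= x.
Proof.
  intros H. pose proof PI2_1.
  destruct (sin_bound x 0) as [L U]. lra. lra.
  unfold sin_approx, sin_term in L, U. simpl in L, U.
  match type of L with ?e <= _ => replace e with (x * (1 - x * x / 6)) in L by field end.
  match type of U with _ <= ?e => replace e with (x - x * x * x * (1/6 - x * x / 120)) in U by field end.
  assert (x * x <= 1) by nra. assert (0 <= x * x * x) by (apply Rmult_le_pos; nra).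
  split.
  - assert (0 <= x * (1 - x * x / 6)) by (apply Rmult_le_pos; lra). lra.
  - assert (0 <= x * x * x * (1/6 - x * x / 120)) by (apply Rmult_le_pos; lra). lra.
Qed.

Lemma sin_abs x : Rabs x <= 1 -> Rabs (sin x) <= Rabs x.
Proof.
  intros H. destruct (Rle_dec 0 x).
  - rewrite (Rabs_right x) in * by lra. pose proof (sin_pos_bound x ltac:(lra)).
    rewrite Rabs_right by lra. lra.
  - rewrite (Rabs_left x) in * by lra. pose proof (sin_pos_bound (- x) ltac:(lra)).
    rewrite sin_neg in H0. rewrite Rabs_left1 by lra. lra.
Qed.

Lemma cos_diff a D : Rabs D <= 1 -> Rabs (cos (a + D) - cos a) <= 2 * Rabs D.
Proof.
  intros H. rewrite cos_plus.
  pose proof (cos_tay D H). pose proof (sin_abs D H).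
  replace (cos a * cos D - sin a * sin D - cos a) with (cos a * (cos D - 1) + - (sin a * sin D)) by ring.
  eapply Rle_trans. apply Rabs_triang. rewrite Rabs_Ropp, !Rabs_mult.
  pose proof (COS_bound a). pose proof (SIN_bound a).
  assert (Rabs (cos a) <= 1) by (apply Rabs_le; lra). assert (Rabs (sin a) <= 1) by (apply Rabs_le; lra).
  assert (Rabs (cos D - 1) <= Rabs D).
  { assert (E : D * D = Rabs D * Rabs D) by (rewrite <- Rabs_mult; symmetry; apply Rabs_right; nra).
    assert (E2 : D * D <= Rabs D) by (rewrite E; pose proof (Rabs_pos D); nra).
    assert (E3 : D * D * (D * D) <= D * D) by (assert (0 <= D * D) by nra; nra).
    apply Rabs_le. split; nra. }
  pose proof (Rabs_pos (cos D - 1)). pose proof (Rabs_pos (sin D)). pose proof (Rabs_pos (cos a)). pose proof (Rabs_pos (sin a)).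
  assert (Rabs (cos a) * Rabs (cos D - 1) <= Rabs D) by nra.
  assert (Rabs (sin a) * Rabs (sin D) <= Rabs D) by nra. lra.
Qed.

Lemma sin_diff a D : Rabs D <= 1 -> Rabs (sin (a + D) - sin a) <= 2 * Rabs D.
Proof.
  intros H. rewrite sin_plus.
  pose proof (cos_tay D H). pose proof (sin_abs D H).
  replace (sin a * cos D + cos a * sin D - sin a) with (sin a * (cos D - 1) + (cos a * sin D)) by ring.
  eapply Rle_trans. apply Rabs_triang. rewrite !Rabs_mult.
  pose proof (COS_bound a). pose proof (SIN_bound a).
  assert (Rabs (cos a) <= 1) by (apply Rabs_le; lra). assert (Rabs (sin a) <= 1) by (apply Rabs_le; lra).
  assert (Rabs (cos D - 1) <= Rabs D).
  { assert (E : D * D = Rabs D * Rabs D) by (rewrite <- Rabs_mult; symmetry; apply Rabs_right; nra).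
    assert (E2 : D * D <= Rabs D) by (rewrite E; pose proof (Rabs_pos D); nra).
    assert (E3 : D * D * (D * D) <= D * D) by (assert (0 <= D * D) by nra; nra).
    apply Rabs_le. split; nra. }
  pose proof (Rabs_pos (cos D - 1)). pose proof (Rabs_pos (sin D)). pose proof (Rabs_pos (cos a)). pose proof (Rabs_pos (sin a)).
  assert (Rabs (sin a) * Rabs (cos D - 1) <= Rabs D) by nra.
  assert (Rabs (cos a) * Rabs (sin D) <= Rabs D) by nra. lra.
Qed.

Lemma cos_perZ x (z : Z) : cos (x + 2 * IZR z * PI) = cos x.
Proof.
  destruct (Z_le_gt_dec 0 z).
  - rewrite <- (Z2Nat.id z) by auto. rewrite <- INR_IZR_INZ. apply cos_period.
  - rewrite <- (cos_period (x + 2 * IZR z * PI) (Z.to_nat (- z))). f_equal.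
    rewrite INR_IZR_INZ, Z2Nat.id by lia. rewrite opp_IZR. ring.
Qed.

Lemma sin_perZ x (z : Z) : sin (x + 2 * IZR z * PI) = sin x.
Proof.
  destruct (Z_le_gt_dec 0 z).
  - rewrite <- (Z2Nat.id z) by auto. rewrite <- INR_IZR_INZ. apply sin_period.
  - rewrite <- (sin_period (x + 2 * IZR z * PI) (Z.to_nat (- z))). f_equal.
    rewrite INR_IZR_INZ, Z2Nat.id by lia. rewrite opp_IZR. ring.
Qed.

Lemma angle_rep_spec t : exists z : Z, angle_rep t = t + 2 * IZR z * PI.
Proof. unfold angle_rep. exists (up (- (t + PI) / (2 * PI))). ring. Qed.

Lemma exp_tay A : 0 <= A -> 0 <= exp (- A) - (1 - A) <= A * A.
Proof.
  intros H. split.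
  - pose proof (exp_ineq1_le (- A)). lra.
  - pose proof (exp_ineq1_le A). rewrite exp_Ropp.
    apply Rle_trans with (/ (1 + A) - (1 - A)).
    apply Rplus_le_compat_r. apply Rinv_le_contravar; lra.
    apply (Rmult_le_reg_r (1 + A)). lra.
    rewrite Rmult_minus_distr_r, Rinv_l by lra. assert (0 <= A * A * A) by (apply Rmult_le_pos; nra). nra.
Qed.


Definition K0 (k sg : R) : R :=
  ((1 / (4 * sg * sg) + sg * sg * (k * k) / 4) * (1 / (4 * sg * sg) + sg * sg * (k * k) / 4)
   + (1 + (1 / (4 * sg * sg) + sg * sg * (k * k) / 4)) * (k * k * (k * k))
   + 2 * (1 / (4 * sg * sg) + sg * sg * (k * k) / 4) * (k * k) + sg * sg * (k * k) / 4 + 4 * (k * k)).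

Lemma unit_cs a : cos a * cos a + sin a * sin a = 1.
Proof. pose proof (sin2_cos2 a). unfold Rsqr in H. lra. Qed.

Lemma est lam sig x y th x0 y0 th0 D n : 0 < lam -> 0 < sig ->
  D = angle_rep (th - th0) -> n = norm3 (x - x0) (y - y0) D ->
  n <= 1 -> 2 * kap lam * n <= 1 ->
  Rabs (Lval lam sig x y th x0 y0 th0 - quad3 (gmat lam sig th0) (x - x0) (y - y0) D)
    <= 2 * PI * sig ^ 2 * K0 (kap lam) sig * (n * (n * n)).
Proof.
  intros Hl Hs eD en Hn1 Hkn.
  destruct (angle_rep_spec (th - th0)) as [z Hz]. rewrite <- eD in Hz.
  assert (eth : th = th0 + D + 2 * IZR (- z) * PI) by (rewrite opp_IZR; lra).
  assert (ec : cos th = cos (th0 + D)) by (rewrite eth; apply cos_perZ).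
  assert (es : sin th = sin (th0 + D)) by (rewrite eth; apply sin_perZ).
  remember (x - x0) as dx eqn:edx. remember (y - y0) as dy eqn:edy.
  remember (kap lam) as k eqn:ek.
  assert (Hk : 0 < k) by (rewrite ek; unfold kap; apply Rdiv_lt_0_compat; [pose proof PI_RGT_0; lra| auto]).
  remember (cos th0) as c eqn:ecc. remember (sin th0) as s eqn:ess.
  remember (cos (th0 + D)) as C1 eqn:eC1. remember (sin (th0 + D)) as S1 eqn:eS1.
  assert (Hn0 : 0 <= n) by (rewrite en; apply sqrt_pos).
  assert (Hnn : dx * dx + dy * dy + D * D = n * n).
  { rewrite en. unfold norm3. rewrite sqrt_sqrt. ring. nra. }
  assert (HD : Rabs D <= 1) by (apply sq_abs_le; nra).
  assert (HCD : cos D = C1 * c + S1 * s).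
  { rewrite eC1, eS1, ecc, ess. rewrite <- cos_minus. f_equal. ring. }
  assert (U1 : C1 * C1 + S1 * S1 = 1) by (rewrite eC1, eS1; apply unit_cs).
  assert (U2 : c * c + s * s = 1) by (rewrite ecc, ess; apply unit_cs).
  remember (1 / (4 * sig * sig)) as B eqn:eB. remember (sig * sig * (k * k) / 4) as Ck eqn:eCk.
  remember (B * (dx * dx + dy * dy) + Ck * (2 - 2 * cos D)) as A eqn:eA.
  remember (- k * ((C1 + c) * dx + (S1 + s) * dy) / 2) as Phi eqn:ePhi.
  remember (B * (dx * dx + dy * dy) + Ck * (D * D)) as A0 eqn:eA0.
  remember (- k * (c * dx + s * dy)) as Phi0 eqn:ePhi0.
  assert (EL : Lval lam sig x y th x0 y0 th0 = 2 * PI * sig ^ 2 * (1 - exp (- A) * cos Phi)).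
  { unfold Lval.
    assert (E1 : Kc sig x y x0 y0 * exp (- (sig ^ 2 * (bx lam th th0 ^ 2 + by_ lam th th0 ^ 2)) / 4) = exp (- A)).
    { unfold Kc. rewrite <- exp_plus. f_equal.
      unfold bx, by_. rewrite <- ek, ec, es, <- ecc, <- ess.
      rewrite eA, eB, eCk, HCD.
      replace (2 - 2 * (C1 * c + S1 * s)) with ((C1 - c) ^ 2 + (S1 - s) ^ 2).
      2:{ transitivity ((C1 * C1 + S1 * S1) + (c * c + s * s) - 2 * (C1 * c + S1 * s)). ring. rewrite U1, U2. ring. }
      rewrite edx, edy. field. lra. }
    assert (E2 : bx lam th th0 * mx x x0 + by_ lam th th0 * my y y0 + g0 lam x y th x0 y0 th0 = Phi).
    { unfold bx, by_, g0, mx, my. rewrite <- ek, ec, es, <- ecc, <- ess.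
      rewrite ePhi, edx, edy. field. }
    rewrite E1, E2. reflexivity. }
  assert (EQ : quad3 (gmat lam sig th0) dx dy D = 2 * PI * sig ^ 2 * (A0 + Phi0 * Phi0 / 2)).
  { transitivity (2 * PI * sig ^ 2 * (A0 + Phi0 * Phi0 / 2) + 2 * sig ^ 2 * PI * B * (dx * dx + dy * dy) * (c * c + s * s - 1)).
    - unfold quad3, gmat. simpl. rewrite <- ecc, <- ess. rewrite eA0, ePhi0, eB, eCk, ek. unfold kap.
      field. split; lra.
    - rewrite U2. ring. }
  rewrite EL, EQ.
  assert (HC : Rabs (C1 - c) <= 2 * Rabs D) by (rewrite eC1, ecc; apply cos_diff; auto).
  assert (HS : Rabs (S1 - s) <= 2 * Rabs D) by (rewrite eS1, ess; apply sin_diff; auto).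
  assert (B1 : forall t, Rabs (cos t) <= 1) by (intros t; apply Rabs_le; apply COS_bound).
  assert (B2 : forall t, Rabs (sin t) <= 1) by (intros t; apply Rabs_le; apply SIN_bound).
  assert (Main : Rabs ((1 - exp (- A) * cos Phi) - (A0 + Phi0 * Phi0 / 2)) <= K0 k sig * (n * (n * n))).
  { unfold K0. rewrite <- eB, <- eCk.
    exact (core dx dy D c s C1 S1 k sig n (cos D) (exp (- A)) (cos Phi) Hk Hs Hn0 Hn1 Hnn HC HS
      ltac:(rewrite eC1; auto) ltac:(rewrite eS1; auto) ltac:(rewrite ecc; auto) ltac:(rewrite ess; auto)
      (cos_tay D HD) (proj2 (COS_bound D)) B Ck A Phi A0 Phi0 eB eCk eA ePhi eA0 ePhi0
      (fun HA => exp_tay A HA) (fun HP => cos_tay Phi HP) (B1 Phi) Hkn). }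
  replace (2 * PI * sig ^ 2 * (1 - exp (- A) * cos Phi) - 2 * PI * sig ^ 2 * (A0 + Phi0 * Phi0 / 2))
    with (2 * PI * sig ^ 2 * ((1 - exp (- A) * cos Phi) - (A0 + Phi0 * Phi0 / 2))) by ring.
  rewrite Rabs_mult. rewrite (Rabs_right (2 * PI * sig ^ 2)).
  2:{ pose proof PI_RGT_0. apply Rle_ge. apply Rmult_le_pos. lra. nra. }
  apply Rle_trans with (2 * PI * sig ^ 2 * (K0 k sig * (n * (n * n)))).
  apply Rmult_le_compat_l. pose proof PI_RGT_0. apply Rmult_le_pos. lra. nra. exact Main.
  right; ring.
Qed.


Lemma R2_unique f l1 l2 : integral_R2 f l1 -> integral_R2 f l2 -> l1 = l2.
Proof.
  intros [F1 [H1 G1]] [F2 [H2 G2]].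
  assert (E : F1 = F2).
  { apply functional_extensionality. intros u. eapply improper_unique; eauto. }
  subst. eapply improper_unique; eauto.
Qed.

Lemma K0_pos k sg : 0 < k -> 0 < sg -> 0 <= K0 k sg.
Proof.
  intros Hk Hs. unfold K0.
  assert (0 < 1 / (4 * sg * sg)) by (apply Rdiv_lt_0_compat; nra).
  assert (0 <= sg * sg * (k * k) / 4) by (apply Rmult_le_pos; [nra|lra]).
  assert (0 <= k * k) by nra. assert (0 <= k * k * (k * k)) by nra.
  set (a := 1 / (4 * sg * sg) + sg * sg * (k * k) / 4) in *.
  assert (0 <= a) by (unfold a; lra).
  assert (0 <= a * a) by nra. assert (0 <= (1 + a) * (k * k * (k * k))) by nra.
  assert (0 <= 2 * a * (k * k)) by nra. lra.
Qed.

Lemma det_val lam sig th0 : 0 < lam -> 0 < sig ->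
  det3 (gmat lam sig th0) =
     8 * sig ^ 6 * PI ^ 3 * (1 / (4 * sig ^ 2) + 2 * PI ^ 2 / lam ^ 2)
       * (1 / (4 * sig ^ 2)) * (sig ^ 2 * PI ^ 2 / lam ^ 2).
Proof.
  intros Hl Hs.
  assert (U : cos th0 * cos th0 + sin th0 * sin th0 = 1) by apply unit_cs.
  transitivity (8 * sig ^ 6 * PI ^ 3 * (1 / (4 * sig ^ 2) + 2 * PI ^ 2 / lam ^ 2)
       * (1 / (4 * sig ^ 2)) * (sig ^ 2 * PI ^ 2 / lam ^ 2) * ((cos th0 * cos th0 + sin th0 * sin th0) * (cos th0 * cos th0 + sin th0 * sin th0))).
  - unfold det3, gmat. simpl. field. split; lra.
  - rewrite U. ring.
Qed.

Theorem mainTheorem5 (lam sig : R) (Hlam : 0 < lam) (Hsig : 0 < sig) :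
  (forall x1 y1 th1 x2 y2 th2 : R, exists l : R,
      gabor_dist_sq lam sig x1 y1 th1 x2 y2 th2 l) /\
  (forall x0 y0 th0 : R,
     forall eps : R, 0 < eps -> exists delta : R, 0 < delta /\
       forall x y th l : R,
         norm3 (x - x0) (y - y0) (angle_rep (th - th0)) < delta ->
         gabor_dist_sq lam sig x y th x0 y0 th0 l ->
         Rabs (l - quad3 (gmat lam sig th0) (x - x0) (y - y0) (angle_rep (th - th0)))
           <= eps * (norm3 (x - x0) (y - y0) (angle_rep (th - th0))) ^ 2) /\
  (forall th0 : R,
     det3 (gmat lam sig th0) =
     8 * sig ^ 6 * PI ^ 3 * (1 / (4 * sig ^ 2) + 2 * PI ^ 2 / lam ^ 2)
       * (1 / (4 * sig ^ 2)) * (sig ^ 2 * PI ^ 2 / lam ^ 2)).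
Proof.
  split; [|split].
  - intros. eexists. apply gabor_val; auto.
  - intros x0 y0 th0 eps Heps.
    assert (Hk : 0 < kap lam) by (unfold kap; apply Rdiv_lt_0_compat; [pose proof PI_RGT_0; lra| auto]).
    set (Kst := 2 * PI * sig ^ 2 * K0 (kap lam) sig).
    assert (HK : 0 <= Kst).
    { unfold Kst. pose proof PI_RGT_0. pose proof (K0_pos (kap lam) sig Hk Hsig).
      apply Rmult_le_pos; auto. apply Rmult_le_pos; [lra|nra]. }
    assert (P1 : 0 < 1 / (2 * kap lam)) by (apply Rdiv_lt_0_compat; lra).
    assert (P2 : 0 < eps / (Kst + 1)) by (apply Rdiv_lt_0_compat; lra).
    exists (Rmin 1 (Rmin (1 / (2 * kap lam)) (eps / (Kst + 1)))). split.
    { apply Rmin_pos. lra. apply Rmin_pos; auto. }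
    intros x y th l Hn Hl.
    assert (El : l = Lval lam sig x y th x0 y0 th0).
    { eapply R2_unique. exact Hl. apply gabor_val; auto. }
    subst l.
    set (D := angle_rep (th - th0)) in *.
    set (n := norm3 (x - x0) (y - y0) D) in *.
    assert (Hn0 : 0 <= n) by (unfold n, norm3; apply sqrt_pos).
    pose proof (Rmin_l 1 (Rmin (1 / (2 * kap lam)) (eps / (Kst + 1)))) as M1.
    pose proof (Rmin_r 1 (Rmin (1 / (2 * kap lam)) (eps / (Kst + 1)))) as M2.
    pose proof (Rmin_l (1 / (2 * kap lam)) (eps / (Kst + 1))) as M3.
    pose proof (Rmin_r (1 / (2 * kap lam)) (eps / (Kst + 1))) as M4.
    assert (N1 : n <= 1) by lra.
    assert (N2 : 2 * kap lam * n <= 1).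
    { assert (n <= 1 / (2 * kap lam)) by lra.
      apply (Rmult_le_compat_l (2 * kap lam)) in H. 2: lra.
      replace (2 * kap lam * (1 / (2 * kap lam))) with 1 in H by (field; lra). lra. }
    assert (N3 : Kst * n <= eps).
    { assert (n <= eps / (Kst + 1)) by lra.
      apply Rle_trans with ((Kst + 1) * n). nra.
      apply (Rmult_le_compat_l (Kst + 1)) in H. 2: lra.
      replace ((Kst + 1) * (eps / (Kst + 1))) with eps in H by (field; lra). lra. }
    pose proof (est lam sig x y th x0 y0 th0 D n Hlam Hsig eq_refl eq_refl N1 N2) as E.
    fold Kst in E.
    eapply Rle_trans. exact E.
    replace (Kst * (n * (n * n))) with ((Kst * n) * (n * n)) by ring.
    replace (n ^ 2) with (n * n) by ring.
    apply Rmult_le_compat_r. nra. exact N3.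
  - intros th0. apply det_val; auto.
Qed.
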